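(* Let $M$ be a three-dimensional warped product space and let $\vec r:\mathbb{S}^2\to M$ be an embedding as a strictly convex closed surface with unit normal $\nu$. Let $\varphi=X\cdot\nu$ be its support function, where $X=rf(r)\frac{\partial}{\partial r}$, and let $m_0=\{p\in\mathbb{S}^2:\vec r(p)=0\}$. Then $d\varphi\neq 0$ at every point of $$Z=\{p\in\mathbb{S}^2\setminus m_0:\varphi(p)=0\},$$ so $Z$ is a regular curve on the sphere.
   Context: A three-dimensional warped product space is (a region of) $\mathbb{R}^3$ with polar coordinates $(r,\theta)$ and metric $ds^2=\frac{1}{f(r)^2}dr^2+r^2dS_2^2$ ($dS_2^2$ round metric, $f$ smooth and positive), with inner product $\cdot$. $X=rf(r)\partial_r$ is the conformal Killing vector field of this space. Strictly convex means positive definite second fundamental form. *)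

(* Defs.v *)
From HB Require Import structures.
From mathcomp Require Import all_boot all_order all_algebra.
From mathcomp Require Import all_classical all_reals all_analysis.
Set Implicit Arguments. Unset Strict Implicit. Unset Printing Implicit Defensive.
Import Order.TTheory GRing.Theory Num.Theory.
Import numFieldNormedType.Exports.
Local Open Scope classical_set_scope.
Local Open Scope ring_scope.

Section Defs.
Variable R : realType.
Notation vec := 'rV[R]_3.

Definition edot (u w : vec) : R := \sum_(i < 3) u ord0 i * w ord0 i.
Definition eradius (x : vec) : R := Num.sqrt (edot x x).

Definition S2 : set vec := [set p | edot p p = 1].

Definition tangent (p v : vec) : Prop := edot v p = 0.

Definition bil (M : 'M[R]_3) (u w : vec) : R := (u *m M *m w^T) ord0 ord0.

(* Gram matrix, in Cartesian coordinates, of the warped metric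
   ds^2 = dr^2 / f(r)^2 + r^2 dS_2^2 = (Euclidean) + (1/f^2 - 1) dr^2,
   valid at x <> 0 (where polar coordinates are defined). *)
Definition warped_gram (f : R -> R) (x : vec) : 'M[R]_3 :=
  1%:M + ((f (eradius x) ^+ 2)^-1 - 1) / (eradius x ^+ 2) *: (x^T *m x).

(* the conformal Killing field X = r f(r) d/dr, in Cartesian components
   X(x) = f(|x|) x  (which is 0 at the origin). *)
Definition Xfield (f : R -> R) (x : vec) : vec := f (eradius x) *: x.

Fixpoint Ck {U W : normedModType R} (n : nat) (A : set U) (F : U -> W) : Prop :=
  match n with
  | 0 => forall x, A x -> {for x, continuous F}
  | n'.+1 => (forall x, A x -> differentiable F x) /\
             forall v : U, Ck n' A (fun y => derive F y v)
  end.

Definition smooth_on {U W : normedModType R} (A : set U) (F : U -> W) : Prop :=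
  forall n, Ck n A F.

(* 0-homogeneous extension to R^3 \ {0} of a map defined on S^2 *)
Definition hext {W : Type} (F : vec -> W) (x : vec) : W := F ((eradius x)^-1 *: x).

(* Second fundamental form of the immersed surface r : S^2 -> (R^3, G)
   at p in direction (v, w) (tangent vectors at p), with respect to the
   normal nu, written with the Christoffel symbols of the first kind:
   h(v,w) = G(D_v D_w r + Gamma(dr v, dr w), nu)
   G(Gamma(a,b),c) = 1/2 (D_a G(b,c) + D_b G(a,c) - D_c G(a,b)). *)
Definition sff (G : vec -> 'M[R]_3) (r nu : vec -> vec) (p v w : vec) : R :=
  let Rx := hext r in
  let a := derive Rx p v in
  let b := derive Rx p w in
  let n := nu p in
  let y := r p in
  bil (G y) (derive (fun x => derive Rx x w) p v) n
  + (bil (derive G y a) b n + bil (derive G y b) a n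
     - bil (derive G y n) a b) / 2.

Definition support_fn (G : vec -> 'M[R]_3) (f : R -> R) (r nu : vec -> vec)
    (p : vec) : R :=
  bil (G (r p)) (Xfield f (r p)) (nu p).

End Defs.
Arguments S2 {R}.

(* Main.v *)
Require Import Defs.
From HB Require Import structures.
From mathcomp Require Import all_boot all_order all_algebra.
From mathcomp Require Import all_classical all_reals all_analysis.
From mathcomp Require Import ring lra.
Import Order.TTheory GRing.Theory Num.Theory.
Import numFieldNormedType.Exports.
Local Open Scope classical_set_scope.
Local Open Scope ring_scope.

Section Alg.
Variable R : realType.
Notation vec := 'rV[R]_3.
Implicit Types u v w x : vec.

Ltac edx := rewrite /edot ?big_ord_recl ?big_ord0 /=.

Lemma edotC u w : edot u w = edot w u.
Proof. edx; ring. Qed.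

Lemma edotDl u v w : edot (u + v) w = edot u w + edot v w.
Proof. edx; rewrite !mxE; ring. Qed.
Lemma edotZl (a : R) u w : edot (a *: u) w = a * edot u w.
Proof. edx; rewrite !mxE; ring. Qed.
Lemma edotNl u w : edot (- u) w = - edot u w.
Proof. edx; rewrite !mxE; ring. Qed.
Lemma edotBl u v w : edot (u - v) w = edot u w - edot v w.
Proof. by rewrite edotDl edotNl. Qed.
Lemma edotDr u v w : edot w (u + v) = edot w u + edot w v.
Proof. by rewrite edotC edotDl !(edotC w). Qed.
Lemma edotZr (a : R) u w : edot w (a *: u) = a * edot w u.
Proof. by rewrite edotC edotZl edotC. Qed.
Lemma edotNr u w : edot w (- u) = - edot w u.
Proof. by rewrite edotC edotNl edotC. Qed.
Lemma edotBr u v w : edot w (u - v) = edot w u - edot w v.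
Proof. by rewrite edotDr edotNr. Qed.
Lemma edot0l w : edot 0 w = 0.
Proof. edx; rewrite !mxE; ring. Qed.
Lemma edot0r w : edot w 0 = 0.
Proof. by rewrite edotC edot0l. Qed.

Lemma edot_ge0 u : 0 <= edot u u.
Proof. edx; rewrite addr0 -!expr2 !addr_ge0 ?sqr_ge0 //. Qed.

Lemma edot_eq0 u : (edot u u == 0) = (u == 0).
Proof.
apply/idP/idP; last by move/eqP->; rewrite edot0l.
edx; rewrite addr0 -!expr2 => /eqP H.
set a := u _ _ in H; set b := u _ _ in H; set c := u _ _ in H.
have h0 := sqr_ge0 a; have h1 := sqr_ge0 b; have h2 := sqr_ge0 c.
have e0 : a ^+ 2 = 0 by lra.
have e1 : b ^+ 2 = 0 by lra.
have e2 : c ^+ 2 = 0 by lra.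
apply/eqP/matrixP => i j; rewrite mxE (ord1 i).
have {e0} e0 : a = 0 by move/eqP: e0; rewrite expf_eq0 /= => /eqP.
have {e1} e1 : b = 0 by move/eqP: e1; rewrite expf_eq0 /= => /eqP.
have {e2} e2 : c = 0 by move/eqP: e2; rewrite expf_eq0 /= => /eqP.
case: j => [[|[|[|//]]] Hj].
- by rewrite -e0 /a; congr (u _ _); apply: val_inj.
- by rewrite -e1 /b; congr (u _ _); apply: val_inj.
- by rewrite -e2 /c; congr (u _ _); apply: val_inj.
Qed.

Lemma eradius_sqr x : eradius x ^+ 2 = edot x x.
Proof. by rewrite /eradius sqr_sqrtr // edot_ge0. Qed.

Lemma eradius_gt0 x : x != 0 -> 0 < eradius x.
Proof. by move=> hx; rewrite /eradius sqrtr_gt0 lt_def edot_ge0 edot_eq0 hx. Qed.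

Lemma mx11_edot u w : (u *m w^T) ord0 ord0 = edot u w.
Proof. by rewrite !mxE /edot; apply: eq_bigr => i _; rewrite mxE. Qed.

Lemma bilE (M : 'M[R]_3) u w : bil M u w = \sum_(i < 3) \sum_(j < 3) u ord0 i * M i j * w ord0 j.
Proof.
rewrite /bil mxE exchange_big; apply: eq_bigr => j _.
rewrite mxE big_distrl; apply: eq_bigr => i _ /=; by rewrite mxE.
Qed.

Lemma bilDm (M N : 'M[R]_3) u w : bil (M + N) u w = bil M u w + bil N u w.
Proof. by rewrite /bil mulmxDr mulmxDl mxE. Qed.
Lemma bilZm a (M : 'M[R]_3) u w : bil (a *: M) u w = a * bil M u w.
Proof. by rewrite /bil -scalemxAr -scalemxAl mxE. Qed.
Lemma bilNm (M : 'M[R]_3) u w : bil (- M) u w = - bil M u w.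
Proof. by rewrite /bil mulmxN mulNmx mxE. Qed.
Lemma bilDl M u v w : bil M (u + v) w = bil M u w + bil M v w.
Proof. by rewrite /bil !mulmxDl mxE. Qed.
Lemma bilZl a M u w : bil M (a *: u) w = a * bil M u w.
Proof. by rewrite /bil -!scalemxAl mxE. Qed.
Lemma bilDr M u v w : bil M w (u + v) = bil M w u + bil M w v.
Proof. by rewrite /bil linearD mulmxDr mxE. Qed.
Lemma bilZr a M u w : bil M w (a *: u) = a * bil M w u.
Proof. by rewrite /bil linearZ -scalemxAr mxE. Qed.

Lemma bil_warped f x u w : bil (warped_gram f x) u w =
  edot u w + ((f (eradius x) ^+ 2)^-1 - 1) / (eradius x ^+ 2) * (edot u x * edot x w).
Proof.
rewrite /warped_gram bilDm bilZm; congr (_ + _ * _).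
  by rewrite /bil mulmx1 mx11_edot.
rewrite /bil !mulmxA -mulmxA mxE big_ord1 -mx11_edot; congr (_ * _).
exact: mx11_edot.
Qed.
End Alg.

Section S0.
Variables (R : realType) (V W : normedModType R).
Lemma line_cvg (x v : V) : (fun h : R => h *: v + x) @ 0^' --> x.
Proof.
apply: cvg_within_filter.
suff : (fun h : R => h *: v + x) @ 0 --> (0:R) *: v + x by rewrite scale0r add0r.
apply: cvgD; last exact: cvg_cst.
apply: cvgZl. exact: cvg_id.
Qed.

Lemma near_line (P : V -> Prop) (x v : V) : (\forall z \near x, P z) ->
  \forall h \near (0:R)^', P (h *: v + x).
Proof. move=> Px; exact: (line_cvg x v) _ Px. Qed.

Lemma D_near (f g : V -> W) x v : (\forall z \near x, f z = g z) -> 'D_v f x = 'D_v g x.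
Proof.
move=> fg; rewrite /derive; congr lim.
have fx : f x = g x by exact: nbhs_singleton fg.
have E : \forall h \near (0:R)^', h^-1 *: ((f \o shift x) (h *: v) - f x) = h^-1 *: ((g \o shift x) (h *: v) - g x).
  by move: (@near_line _ x v fg); apply: filterS => h /= ->; rewrite fx.
rewrite funeqE => P; apply/propext; split; apply: near_eq_cvg => //.
by move: E; apply: filterS => h ->.
Qed.
End S0.

Section S.
Variables (R : realType) (V W : normedModType R).

Lemma D_lin (f : V -> W) x a u w : differentiable f x ->
  'D_(a *: u + w) f x = a *: 'D_u f x + 'D_w f x.
Proof. by move=> df; rewrite !deriveE // linearP. Qed.

Lemma D_comp (U W' : normedModType R) (f : V -> U) (g : U -> W') x v :
  differentiable f x -> differentiable g (f x) ->
  'D_v (g \o f) x = 'D_('D_v f x) g (f x).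
Proof.
move=> df dg; rewrite deriveE; last exact: differentiable_comp.
by rewrite diff_comp // !deriveE.
Qed.

Lemma D_mul (a b : V -> R) x v : derivable a x v -> derivable b x v ->
  'D_v (fun z => a z * b z) x = a x * 'D_v b x + b x * 'D_v a x.
Proof. move=> da db; exact: (deriveM da db). Qed.

Lemma der_mul (a b : V -> R) x v : derivable a x v -> derivable b x v ->
  derivable (fun z => a z * b z) x v.
Proof. move=> da db; exact: (derivableM da db). Qed.

Lemma D_sum n (h : 'I_n -> V -> R) x v : (forall i, derivable (h i) x v) ->
  'D_v (fun z => \sum_(i < n) h i z) x = \sum_(i < n) 'D_v (h i) x.
Proof.
move=> dh; rewrite -derive_sum //; congr derive.
by apply/funext => z; rewrite fct_sumE.
Qed.

Lemma der_sum n (h : 'I_n -> V -> R) x v : (forall i, derivable (h i) x v) ->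
  derivable (fun z => \sum_(i < n) h i z) x v.
Proof.
move=> dh; have := derivable_sum dh.
by have -> : (\sum_(i < n) h i) = (fun z => \sum_(i < n) h i z) by apply/funext => z; rewrite fct_sumE.
Qed.

Lemma D_coord m n (F : V -> 'M[R]_(m, n)) i j x v : differentiable F x ->
  'D_v (fun z => F z i j) x = ('D_v F x) i j.
Proof.
move=> dF.
have := @D_comp _ _ F (fun N : 'M[R]_(m, n) => N i j) x v dF (differentiable_coord _ _ _).
rewrite /comp => ->.
apply: lim_near_cst => //; near=> h.
rewrite /= !mxE addrK [_ *: _]mulrA mulVf ?mul1r //.
by near: h; exact: nbhs_dnbhs_neq.
Unshelve. all: by end_near.
Qed.

Lemma der_coord m n (F : V -> 'M[R]_(m, n)) i j x v : differentiable F x ->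
  derivable (fun z => F z i j) x v.
Proof.
move=> dF; apply: diff_derivable.
have -> : (fun z => F z i j) = (fun N : 'M[R]_(m, n) => N i j) \o F by [].
by apply: differentiable_comp => //; exact: differentiable_coord.
Qed.

Lemma D_mul3 (a b c : V -> R) x v : derivable a x v -> derivable b x v -> derivable c x v ->
  'D_v (fun z => a z * b z * c z) x =
  'D_v a x * b x * c x + a x * 'D_v b x * c x + a x * b x * 'D_v c x.
Proof.
move=> da db dc.
have dab : derivable (fun z => a z * b z) x v by exact: der_mul.
rewrite (@D_mul (fun z => a z * b z) c x v dab dc) (@D_mul a b x v da db); ring.
Qed.

Lemma der_mul3 (a b c : V -> R) x v : derivable a x v -> derivable b x v -> derivable c x v ->
  derivable (fun z => a z * b z * c z) x v.
Proof. by move=> da db dc; apply: der_mul => //; apply: der_mul. Qed.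
End S.

Section S2.
Variables (R : realType) (V : normedModType R).
Notation vec := 'rV[R]_3.

Lemma D_bil (M : V -> 'M[R]_3) (s t : V -> vec) x v :
  differentiable M x -> differentiable s x -> differentiable t x ->
  'D_v (fun z => bil (M z) (s z) (t z)) x =
  bil ('D_v M x) (s x) (t x) + bil (M x) ('D_v s x) (t x) + bil (M x) (s x) ('D_v t x).
Proof.
move=> dM ds dt.
have -> : (fun z => bil (M z) (s z) (t z)) =
  (fun z => \sum_(i < 3) \sum_(j < 3) s z ord0 i * M z i j * t z ord0 j).
  by apply/funext => z; rewrite bilE.
rewrite D_sum; last by move=> i; apply: der_sum => j; apply: der_mul3; apply: der_coord.
rewrite !bilE -!big_split; apply: eq_bigr => i _.
rewrite D_sum; last by move=> j; apply: der_mul3; apply: der_coord.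
rewrite -!big_split; apply: eq_bigr => j _.
rewrite D_mul3; [|exact: der_coord..].
rewrite [X in _ = X + _]addrC.
by congr (_ * _ * _ + _ * _ * _ + _ * _ * _); apply: D_coord.
Qed.

Lemma D_edot (s t : V -> vec) x v :
  differentiable s x -> differentiable t x ->
  'D_v (fun z => edot (s z) (t z)) x = edot ('D_v s x) (t x) + edot (s x) ('D_v t x).
Proof.
move=> ds dt; rewrite /edot D_sum; last by move=> i; apply: der_mul; apply: der_coord.
rewrite -big_split; apply: eq_bigr => i _.
rewrite D_mul; [|exact: der_coord..].
rewrite (@D_coord _ _ _ _ s ord0 i x v ds) (@D_coord _ _ _ _ t ord0 i x v dt) /=; ring.
Qed.

Lemma diff_edot (s t : V -> vec) x :
  differentiable s x -> differentiable t x ->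
  differentiable (fun z => edot (s z) (t z)) x.
Proof.
move=> ds dt; rewrite /edot.
have -> : (fun z => \sum_(i < 3) s z ord0 i * t z ord0 i) = \sum_(i < 3) (fun z => s z ord0 i * t z ord0 i).
  by apply/funext => z; rewrite fct_sumE.
apply: differentiable_sum => i; apply: differentiableM.
  exact: (differentiable_comp ds (differentiable_coord _ _ _)).
exact: (differentiable_comp dt (differentiable_coord _ _ _)).
Qed.
End S2.


Section Hom.
Variable R : realType.
Notation vec := 'rV[R]_3.

Lemma eradiusZ (l : R) (z : vec) : 0 <= l -> eradius (l *: z) = l * eradius z.
Proof.
move=> l0; rewrite /eradius edotZl edotZr mulrA -expr2 sqrtrM ?sqr_ge0 //.
by rewrite sqrtr_sqr ger0_norm.
Qed.

Lemma hext_scale (W : Type) (F : vec -> W) (l : R) (z : vec) : 0 < l ->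
  hext F (l *: z) = hext F z.
Proof.
move=> l0; rewrite /hext eradiusZ ?ltW // invfM scalerA mulrAC mulVf ?mul1r //.
by rewrite gt_eqF.
Qed.

Lemma hext_S2 (W : Type) (F : vec -> W) (z : vec) : edot z z = 1 -> hext F z = F z.
Proof. by move=> hz; rewrite /hext /eradius hz sqrtr1 invr1 scale1r. Qed.

Lemma normalize_S2 (x : vec) : x != 0 -> edot ((eradius x)^-1 *: x) ((eradius x)^-1 *: x) = 1.
Proof.
move=> hx; rewrite edotZl edotZr -eradius_sqr mulrA -expr2 -exprMn mulVf ?expr1n //.
by rewrite gt_eqF // eradius_gt0.
Qed.

Lemma normalizeK (x : vec) : x != 0 -> x = eradius x *: ((eradius x)^-1 *: x).
Proof. by move=> hx; rewrite scalerA mulfV ?scale1r // gt_eqF // eradius_gt0. Qed.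

Lemma scale_aux (l h : R) (u z : vec) : l != 0 -> l *: (h *: (l^-1 *: u) + z) = h *: u + l *: z.
Proof. by move=> l0; rewrite scalerDr !scalerA mulrAC mulfV // mul1r. Qed.

Lemma D_hext_scale (W : normedModType R) (F : vec -> W) (l : R) (z u : vec) : 0 < l ->
  'D_u (hext F) (l *: z) = 'D_(l^-1 *: u) (hext F) z.
Proof.
move=> l0; rewrite /derive.
suff -> : (fun h : R => h^-1 *: ((hext F \o shift (l *: z)) (h *: u) - hext F (l *: z))) =
  (fun h => h^-1 *: ((hext F \o shift z) (h *: (l^-1 *: u)) - hext F z)) by [].
apply/funext => h /=.
rewrite -(@hext_scale _ F l (h *: (l^-1 *: u) + z) l0) -[in RHS](@hext_scale _ F l z l0).
congr (_ *: (hext F _ - _)).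
have l0' : l != 0 by rewrite gt_eqF.
by rewrite -(@scale_aux l h u z l0').
Qed.

Lemma D_hext_radial (W : normedModType R) (F : vec -> W) (z : vec) :
  'D_z (hext F) z = 0.
Proof.
apply: lim_near_cst => //.
have : \forall h \near (0:R)^', 0 < h *: (1:R) + 1.
  have := @near_line R R (fun z => 0 < z) 1 1. apply.
  exact: lt_nbhsr ltr01.
apply: filterS => h; rewrite [h *: 1]mulr1 => h0 /=.
by rewrite -[X in h *: z + X]scale1r -scalerDl hext_scale // subrr scaler0.
Qed.
End Hom.


Section M.
Context {R : realType}.
Notation vec := 'rV[R]_3.

Lemma smooth_diff {U W : normedModType R} {A : set U} {F : U -> W} {x} :
  smooth_on A F -> A x -> differentiable F x.
Proof. by move=> hs; exact: (hs 1%N).1. Qed.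

Lemma smooth_diff2 {W : normedModType R} {A : set vec} {F : vec -> W} v {x} :
  smooth_on A F -> A x -> differentiable (fun y => 'D_v F y) x.
Proof. by move=> hs; exact: ((hs 2%N).2 v).1. Qed.

Lemma S2_neq0 (p : vec) : edot p p = 1 -> p != 0.
Proof. by move=> hp; apply/negP => /eqP p0; move: hp; rewrite p0 edot0l => /eqP; rewrite eq_sym oner_eq0. Qed.

Lemma Q_zero (r nu : vec -> vec) (G : vec -> 'M[R]_3) :
  smooth_on [set x | x != 0] (hext r) ->
  (forall p v, S2 p -> tangent p v -> bil (G (r p)) (derive (hext r) p v) (nu p) = 0) ->
  forall x w, x != 0 -> bil (G (hext r x)) ('D_w (hext r) x) (hext nu x) = 0.
Proof.
move=> sr horth x w hx.
set l := eradius x; set z := l^-1 *: x.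
have l0 : 0 < l by exact: eradius_gt0.
have hz : edot z z = 1 by exact: normalize_S2.
have z0 : z != 0 by exact: S2_neq0.
have xE : x = l *: z by exact: normalizeK.
have Er : hext r x = r z by rewrite /hext.
have En : hext nu x = nu z by rewrite /hext.
have ED : 'D_w (hext r) x = 'D_(l^-1 *: w) (hext r) z by rewrite {1}xE D_hext_scale.
rewrite Er En ED. clearbody z.
have dz : differentiable (hext r) z by exact: (smooth_diff sr z0).
set w' := w - edot w z *: z.
have tw' : tangent z w' by rewrite /tangent /w' edotBl edotZl hz mulr1 subrr.
have -> : l^-1 *: w = l^-1 *: w' + (l^-1 * edot w z) *: z.
  by rewrite /w' scalerBr scalerA addrNK.
rewrite deriveE // linearD !linearZ /= -!deriveE // D_hext_radial scaler0 addr0.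
by rewrite bilZl horth // mulr0.
Qed.

Lemma D_near_dir (W : normedModType R) (f : vec -> W) x u v :
  (\forall h \near (0:R)^', f (h *: u + x) = f (h *: v + x)) -> 'D_u f x = 'D_v f x.
Proof.
move=> E; rewrite /derive; congr lim.
rewrite funeqE => P; apply/propext; split; apply: near_eq_cvg => //;
  by move: E; apply: filterS => h /= ->.
Qed.

Lemma diff_eradius (y : vec) : y != 0 -> differentiable (@eradius R) y.
Proof.
move=> y0.
have -> : @eradius R = Num.sqrt \o (fun z => edot z z) by [].
apply: differentiable_comp.
  by apply: diff_edot; case: (is_diff_id y).
apply/derivable1_diffP.
have h : 0 < edot y y by rewrite lt_def edot_eq0 y0 edot_ge0.
exact: (@ex_derive _ _ _ _ _ _ _ (is_derive1_sqrt h)).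
Qed.

Lemma warped_X (f : R -> R) (z m : vec) : z != 0 -> f (eradius z) != 0 ->
  bil (warped_gram f z) (Xfield f z) m = edot z m / f (eradius z).
Proof.
move=> z0 f0; rewrite bil_warped /Xfield !edotZl.
have e0 : eradius z != 0 by rewrite gt_eqF // eradius_gt0.
rewrite -eradius_sqr; field.
by rewrite f0 e0.
Qed.

Lemma bil0l (M : 'M[R]_3) (w : vec) : bil M 0 w = 0.
Proof. by rewrite -(scale0r 0) bilZl mul0r. Qed.
Lemma bil0r (M : 'M[R]_3) (w : vec) : bil M w 0 = 0.
Proof. by rewrite -(scale0r 0) bilZr mul0r. Qed.
End M.


Section LA.
Context {R : realType}.
Notation vec := 'rV[R]_3.

Lemma mx11_mul (v q : vec) (m : 'rV[R]_3) : (v *m q^T) *m m = edot v q *: m.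
Proof. by rewrite [v *m q^T]mx11_scalar mul_scalar_mx mx11_edot. Qed.

Lemma surj_aux (A : {linear vec -> vec}) (p n X : vec) : edot p p = 1 -> edot n n = 1 ->
  (forall v, tangent p v -> edot (A v) n = 0) ->
  (forall v, tangent p v -> v != 0 -> A v != 0) ->
  edot X n = 0 -> exists2 w, tangent p w & A w = X.
Proof.
move=> hp hn hA hinj hX.
have scale0r' (u : vec) : (0:R) *: u = 0 by rewrite scale0r.
pose M : 'M[R]_3 := (1%:M - p^T *m p) *m lin1_mx A + p^T *m n.
have ML v : v *m M = A (v - edot v p *: p) + edot v p *: n.
  rewrite /M mulmxDr !mulmxA mulmxBr mulmx1 mulmxA !mx11_mul.
  by rewrite mul_rV_lin1.
have tperp v : tangent p (v - edot v p *: p).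
  by rewrite /tangent edotBl edotZl hp mulr1 subrr.
have key v : edot (v *m M) n = edot v p.
  by rewrite ML edotDl hA // edotZl hn mulr1 add0r.
have inj (v : vec) : v *m M = 0 -> v = 0.
  move=> Mv; have vp : edot v p = 0 by rewrite -key Mv edot0l.
  move: Mv; rewrite ML vp !scale0r subr0 addr0 => Av.
  apply/eqP; apply/negPn/negP => hv.
  by move: (hinj v vp hv); rewrite Av eqxx.
have uM : M \in unitmx.
  rewrite unitmxE unitfE; apply/negP => /det0P [v v0 Mv].
  by move/negP: v0; apply; apply/eqP; exact: inj.
exists (X *m invmx M).
  by rewrite /tangent -key mulmxKV.
have := ML (X *m invmx M); rewrite mulmxKV //.
have -> : edot (X *m invmx M) p = 0 by rewrite -key mulmxKV.
by rewrite !scale0r subr0 addr0 => <-.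
Qed.
End LA.


Theorem proposition9 (R : realType)
  (Omega : set 'rV[R]_3) (f : R -> R) (G : 'rV[R]_3 -> 'M[R]_3)
  (r nu : 'rV[R]_3 -> 'rV[R]_3) :
  open Omega ->
  smooth_on [set t | exists2 x, Omega x & x != 0 /\ t = eradius x] f ->
  (forall x, Omega x -> x != 0 -> 0 < f (eradius x)) ->
  smooth_on Omega G ->
  (forall x, Omega x -> x != 0 -> G x = warped_gram f x) ->
  (forall p, S2 p -> Omega (r p)) ->
  smooth_on [set x | x != 0] (hext r) ->
  {in S2 &, injective r} ->
  (forall p v, S2 p -> tangent p v -> v != 0 -> derive (hext r) p v != 0) ->
  smooth_on [set x | x != 0] (hext nu) ->
  (forall p, S2 p -> bil (G (r p)) (nu p) (nu p) = 1) ->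
  (forall p v, S2 p -> tangent p v ->
     bil (G (r p)) (derive (hext r) p v) (nu p) = 0) ->
  (forall p v, S2 p -> tangent p v -> v != 0 -> 0 < sff G r nu p v v) ->
  forall p, S2 p -> r p != 0 -> support_fn G f r nu p = 0 ->
    exists2 v, tangent p v & derive (hext (support_fn G f r nu)) p v != 0.
Proof.
move=> oO sf fpos sG Gw rO sr rinj rimm snu nunit northo hconv p hp hy hphi.
have p0 : p != 0 by exact: S2_neq0.
have Oy : Omega (r p) := rO p hp.
have Gy : G (r p) = warped_gram f (r p) := Gw _ Oy hy.
have F0 : 0 < f (eradius (r p)) := fpos _ Oy hy.
have F0' : f (eradius (r p)) != 0 by rewrite gt_eqF.
have e0 : eradius (r p) != 0 by rewrite gt_eqF // eradius_gt0.
have bilG u w : bil (G (r p)) u w = edot u w +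
   ((f (eradius (r p)) ^+ 2)^-1 - 1) / (eradius (r p) ^+ 2) * (edot u (r p) * edot (r p) w).
  by rewrite Gy bil_warped.
have yn : edot (r p) (nu p) = 0.
  move: hphi; rewrite /support_fn Gy warped_X //.
  by move/eqP; rewrite mulf_eq0 invr_eq0 (negbTE F0') orbF => /eqP.
have nn : edot (nu p) (nu p) = 1.
  by move: (nunit p hp); rewrite bilG [edot (nu p) (r p)]edotC yn mul0r mulr0 addr0.
have Rp : hext r p = r p by exact: hext_S2.
have Np : hext nu p = nu p by exact: hext_S2.
have dR (x : 'rV[R]_3) : x != 0 -> differentiable (hext r) x by move=> x0; exact: (smooth_diff sr x0).
have hAn u : tangent p u -> edot ('D_u (hext r) p) (nu p) = 0.
  by move=> tu; move: (northo p u hp tu); rewrite bilG yn !mulr0 addr0.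
have dRp := dR p p0.
have [w tw aw] : exists2 w, tangent p w & 'd (hext r) p w = f (eradius (r p)) *: r p.
  apply: (@surj_aux _ _ p (nu p) _ hp nn).
  - by move=> v tv; rewrite -deriveE // hAn.
  - by move=> v tv v0; rewrite -deriveE //; exact: rimm.
  - by rewrite edotZl yn mulr0.
have a_def : 'D_w (hext r) p = f (eradius (r p)) *: r p by rewrite deriveE.
have w0 : w != 0.
  apply/negP => /eqP w0; move: a_def; rewrite w0 derive0 => /esym/eqP.
  by rewrite scaler_eq0 (negbTE F0') (negbTE hy).
have dV : differentiable (fun x => 'D_w (hext r) x) p by exact: (smooth_diff2 w sr p0).
have dN : differentiable (hext nu) p by exact: (smooth_diff snu p0).
have dGy : differentiable G (r p) by exact: (smooth_diff sG Oy).
have dGR : differentiable (fun x => G (hext r x)) p.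
  by apply: (differentiable_comp dRp); rewrite Rp.
have EQ := @D_bil _ _ _ _ _ p w dGR dV dN.
have EQ0 : 'D_w (fun z => bil (G (hext r z)) ('D_w (hext r) z) (hext nu z)) p = 0.
  rewrite (@D_near _ _ _ _ (fun _ => 0)); first exact: derive_cst.
  near=> x; apply: Q_zero => //.
  near: x; exact: (cvgr_neq0 _ cvg_id p0).
have DGR : 'D_w (fun x => G (hext r x)) p = 'D_('D_w (hext r) p) G (r p).
  rewrite -Rp; apply: (@D_comp _ _ _ _ _ _ p w dRp); rewrite Rp //.
set a := 'D_w (hext r) p.
have Dg u : 'D_u (fun z => bil (G z) a a) (r p) = bil ('D_u G (r p)) a a.
  have dc : differentiable (fun _ : 'rV[R]_3 => a) (r p) by exact: differentiable_cst.
  rewrite (@D_bil _ _ G (fun _ => a) (fun _ => a) (r p) u dGy dc dc).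
  by rewrite derive_cst bil0l bil0r !addr0.
have Dneg : 'D_(- nu p) G (r p) = - 'D_(nu p) G (r p) by rewrite !deriveE // linearN.
have an : edot a (nu p) = 0 by rewrite /a a_def edotZl yn mulr0.
have Deq : 'D_(- nu p) (fun z => bil (G z) a a) (r p) = 'D_(nu p) (fun z => bil (G z) a a) (r p).
  apply: D_near_dir.
  have nO : \forall z \near r p, Omega z /\ z != 0.
    near=> z; split; near: z; last exact: (cvgr_neq0 _ cvg_id hy).
    by apply: open_nbhs_nbhs; split.
  have h1 := @near_line _ _ _ (r p) (nu p) nO.
  have h2 := @near_line _ _ _ (r p) (- nu p) nO.
  near=> h.
  have On1 : Omega (h *: (- nu p) + r p) /\ h *: (- nu p) + r p != 0 by near: h.
  have On2 : Omega (h *: nu p + r p) /\ h *: nu p + r p != 0 by near: h.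
  case: On1 => O1 n1; case: On2 => O2 n2.
  rewrite /= !Gw // !bil_warped.
  have E1 : edot (h *: (- nu p) + r p) (h *: (- nu p) + r p) = edot (h *: nu p + r p) (h *: nu p + r p).
    rewrite !edotDl !edotDr !edotZl !edotZr !edotNl !edotNr ?[edot (nu p) (r p)]edotC ?yn; ring.
  have E2 v : edot a (h *: v + r p) = edot a (r p) + h * edot a v by rewrite edotDr edotZr addrC.
  rewrite /eradius E1 ![edot (h *: _ + r p) a]edotC !E2 edotNr an; congr (_ + _ * _); ring.
have DGn : bil ('D_(nu p) G (r p)) a a = 0.
  move: Deq; rewrite !Dg Dneg bilNm => E; lra.
have Hs := hconv p w hp tw w0.
rewrite /sff /= in Hs.
rewrite EQ0 DGR Rp -/a Np in EQ.
have Hs' : 0 < bil (G (r p)) ('D_w (fun x => 'D_w (hext r) x) p) (nu p) +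
   (bil ('D_a G (r p)) a (nu p) + bil ('D_a G (r p)) a (nu p) - bil ('D_(nu p) G (r p)) a a) / 2 := Hs.
rewrite DGn subr0 in Hs'.
have Hneg : 0 < - bil (G (r p)) a ('D_w (hext nu) p) by lra.
exists w => //.
have Rp0 : hext r p != 0 by rewrite Rp.
have DPhi : 'D_w (hext (support_fn G f r nu)) p =
    'D_w (fun x => edot (hext r x) (hext nu x) * (f (eradius (hext r x)))^-1) p.
  apply: D_near; near=> x.
  have x0 : x != 0 by near: x; exact: (cvgr_neq0 _ cvg_id p0).
  have Rx0 : hext r x != 0.
    by near: x; exact: (cvgr_neq0 _ (differentiable_continuous dRp) Rp0).
  have Ox : Omega (hext r x) by apply: rO; exact: normalize_S2.
  change (bil (G (hext r x)) (Xfield f (hext r x)) (hext nu x) = 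
     edot (hext r x) (hext nu x) * (f (eradius (hext r x)))^-1).
  by rewrite Gw // warped_X // gt_eqF // fpos.
have df : differentiable f (eradius (r p)).
  by apply: (smooth_diff sf); exists (r p).
have dC : differentiable (fun x => f (eradius (hext r x))) p.
  have de := @diff_eradius _ _ hy.
  have dfe := differentiable_comp de df.
  rewrite -Rp in dfe.
  exact: (differentiable_comp dRp dfe).
have Cp0 : f (eradius (hext r p)) != 0 by rewrite Rp.
have dB := differentiableV dC Cp0.
have dA : differentiable (fun x => edot (hext r x) (hext nu x)) p.
  exact: diff_edot.
rewrite DPhi (@D_mul _ _ _ _ p w (diff_derivable dA) (diff_derivable dB)).
rewrite (@D_edot _ _ _ _ p w dRp dN) Rp Np -/a an add0r yn mul0r add0r.
rewrite mulf_eq0 invr_eq0 negb_or F0' /=; apply/negP => /eqP H0.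
move: Hneg; rewrite /a a_def bilZl bilG H0 !mulr0 addr0 mulr0 oppr0.
by rewrite ltxx.
Unshelve. all: by end_near.
Qed.
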